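(* Let $R$ be an associative ring with identity and $a,b\in R$. If $ab\in R^{\dagger}$, then $ba\in R^{\dagger}$ and $(ba)^{\dagger}=b\big((ab)^{\dagger}\big)^2a$.
   Context: For $x\in R$, $\mathrm{comm}(x)=\{y\in R : xy=yx\}$ and $\mathrm{comm}^2(x)=\{y\in R : yz=zy \text{ for all } z\in\mathrm{comm}(x)\}$. $R^{rad}$ is the Jacobson radical of $R$. An element $x$ has a p-Drazin (pseudo Drazin) inverse if there is $y\in R$ with $y=yxy$, $y\in\mathrm{comm}^2(x)$ and $x^k-x^{k+1}y\in R^{rad}$ for some $k\in\mathbb{N}$; such $y$ is unique and denoted $x^{\dagger}$; $R^{\dagger}$ is the set of such $x$. *)

(* Defs.v *)
From HB Require Import structures.
From mathcomp Require Import all_boot all_order all_algebra.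
Set Implicit Arguments. Unset Strict Implicit. Unset Printing Implicit Defensive.
Import GRing.Theory.
Local Open Scope ring_scope.

(* u is a (two-sided) unit of R, stated without requiring a unitRing structure. *)
Definition is_unit_el (R : pzRingType) (u : R) : Prop :=
  exists v : R, v * u = 1 /\ u * v = 1.

Definition commutant (R : pzRingType) (x : R) : R -> Prop :=
  fun y => x * y = y * x.

Definition dcommutant (R : pzRingType) (x : R) : R -> Prop :=
  fun y => forall z : R, commutant x z -> y * z = z * y.

(* Membership in the Jacobson radical R^rad, via the standard elementwise
   characterization: x \in J(R) iff 1 - r x is a unit for every r \in R. *)
Definition in_jacobson (R : pzRingType) (x : R) : Prop :=
  forall r : R, is_unit_el (1 - r * x).

Definition is_pdrazin_inv (R : pzRingType) (x y : R) : Prop :=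
  [/\ y = y * x * y, dcommutant x y &
      exists k : nat, in_jacobson (x ^+ k - x ^+ k.+1 * y)].

Definition has_pdrazin (R : pzRingType) (x : R) : Prop :=
  exists y : R, is_pdrazin_inv x y.

(* Main.v *)
Require Import Defs.
From mathcomp Require Import all_boot all_order all_algebra.
Import GRing.Theory.
Local Open Scope ring_scope.

Lemma jac_lemma (R : pzRingType) (u v : R) :
  is_unit_el (1 - u*v) -> is_unit_el (1 - v*u).
Proof.
case=> c [h1 h2]; exists (1 + v*c*u); split.
- have e : v*(c*(1-u*v))*u = v*u by rewrite h1 mulr1.
  rewrite !(mulrBr, mulrBl, mulr1, mul1r) !mulrA in e.
  rewrite mulrDl mul1r mulrBr mulr1 !mulrA.
  by rewrite e subrK.
- have e : v*((1-u*v)*c)*u = v*u by rewrite h2 mulr1.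
  rewrite !(mulrBr, mulrBl, mulr1, mul1r) !mulrA in e.
  rewrite mulrDr mulr1 mulrBl mul1r !mulrA.
  by rewrite e subrK.
Qed.

Lemma jac_sandwich (R : pzRingType) (a b w : R) :
  in_jacobson w -> in_jacobson (b * w * a).
Proof.
move=> hw r; rewrite !mulrA; apply: (@jac_lemma R a (r*b*w)).
by rewrite !mulrA; apply: hw.
Qed.

Lemma pow_ba (R : pzRingType) (a b : R) n :
  (b * a) ^+ n.+1 = b * (a * b) ^+ n * a.
Proof.
elim: n => [|n IH]; first by rewrite expr1 expr0 mulr1.
by rewrite exprS IH exprS !mulrA.
Qed.

Lemma comm3 (R : pzRingType) (y s : R) : y * s = s * y -> y * y * y * s = s * (y * y * y).
Proof.
move=> cy.
have -> : y * y * y * s = y * (y * (y * s)) by rewrite !mulrA.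
rewrite cy.
have -> : y * (y * (s * y)) = y * (y * s) * y by rewrite !mulrA.
rewrite cy.
have -> : y * (s * y) * y = y * s * (y * y) by rewrite !mulrA.
by rewrite cy !mulrA.
Qed.

Theorem corollary3p3 (R : pzRingType) (a b : R) :
  has_pdrazin (a * b) ->
  has_pdrazin (b * a) /\
  (forall y : R, is_pdrazin_inv (a * b) y ->
     is_pdrazin_inv (b * a) (b * y ^+ 2 * a)).
Proof.
suff H : forall y : R, is_pdrazin_inv (a * b) y ->
     is_pdrazin_inv (b * a) (b * y ^+ 2 * a).
  by case=> y hy; split=> //; exists (b * y ^+ 2 * a); apply: H.
move=> y [hyxy hdc [k hk]].
set x := a * b in hyxy hdc hk *.
have cxy : y * x = x * y by apply: hdc; rewrite /commutant.
have y2x : y * y * x = y by rewrite -mulrA cxy mulrA -hyxy.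
have xy2 : x * (y * y) = y by rewrite mulrA -cxy -hyxy.
split.
- rewrite expr2.
  have -> : b * (y * y) * a * (b * a) * (b * (y * y) * a)
        = b * ((y * y * x) * (x * (y * y))) * a.
    by rewrite /x !mulrA.
  by rewrite y2x xy2.
- move=> t ht; rewrite /commutant in ht.
  have cat : commutant x (a * t * b).
    rewrite /commutant /x.
    have -> : a * b * (a * t * b) = a * (b * a * t) * b by rewrite !mulrA.
    by rewrite ht !mulrA.
  have cy := hdc _ cat.
  have e1 : y * y = y * y * y * x by rewrite -(mulrA (y*y)) -{1}y2x -mulrA cxy !mulrA.
  have e2 : x * (y * y * y) = y * y by rewrite mulrA xy2.
  rewrite expr2.
  have -> : b * (y * y) * a * t = b * (y * y * y) * (a * (b * a * t))
    by rewrite {1}e1 /x !mulrA.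
  rewrite ht.
  have -> : b * (y * y * y) * (a * (t * (b * a))) = b * ((y * y * y) * (a * t * b)) * a
    by rewrite !mulrA.
  have -> : y * y * y * (a * t * b) = a * t * b * (y * y * y).
    by apply: comm3.
  have -> : b * (a * t * b * (y * y * y)) * a = (b * a * t) * (b * (y * y * y) * a)
    by rewrite !mulrA.
  rewrite ht.
  have -> : t * (b * a) * (b * (y * y * y) * a) = t * (b * (x * (y * y * y)) * a)
    by rewrite /x !mulrA.
  by rewrite e2 !mulrA.
- exists k.+1.
  have -> : (b * a) ^+ k.+1 - (b * a) ^+ k.+2 * (b * y ^+ 2 * a)
          = b * (x ^+ k - x ^+ k.+1 * y) * a.
    rewrite !(@pow_ba R a b) -/x expr2.
    have -> : b * x ^+ k.+1 * a * (b * (y * y) * a) = b * (x ^+ k.+1 * (x * (y * y))) * a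
      by rewrite /x !mulrA.
    by rewrite xy2 mulrBr mulrBl.
  exact: jac_sandwich.
Qed.
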